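(* The class $\mathbb{RBA}$ of all residuated basic algebras has the finite embeddability property: for every residuated basic algebra $\mathbf{A}$ and every finite subset $B$ of its universe, the partial subalgebra of $\mathbf{A}$ on $B$ embeds into some finite residuated basic algebra.
   Context: A residuated basic algebra (RBA) is an algebra $(\mathsf{A},\wedge,\vee,\top,\bot,\rightarrow,\leftarrow,\cdot)$ such that $(\mathsf{A},\wedge,\vee,\top,\bot)$ is a bounded distributive lattice with order $\le$ and for all $a,b,c$: $a\cdot b\le c$ iff $b\le a\rightarrow c$ iff $a\le c\leftarrow b$; $a\cdot\top\le a$; $\top\cdot a\le a$; $a\cdot b\le(a\cdot b)\cdot b$. The partial subalgebra on a finite $B\subseteq\mathsf{A}$ is $B$ with each operation of $\mathbf{A}$ restricted to those arguments in $B$ whose value lies in $B$ (constants included when they lie in $B$). An embedding of it into an algebra $\mathbf{C}$ is an injective map $h:B\to\mathbf{C}$ such that $h(f(b_1,\dots,b_k))=f^{\mathbf{C}}(h(b_1),\dots,h(b_k))$ whenever $f(b_1,\dots,b_k)$ is defined in the partial subalgebra. *)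

(* Defs.v *)
From Stdlib Require Import List.
Import ListNotations.

Record RBA := {
  car : Type;
  rmeet : car -> car -> car;
  rjoin : car -> car -> car;
  rtop : car;
  rbot : car;
  rimp : car -> car -> car;
  limp : car -> car -> car;
  rmul : car -> car -> car;
  meet_assoc : forall a b c, rmeet a (rmeet b c) = rmeet (rmeet a b) c;
  join_assoc : forall a b c, rjoin a (rjoin b c) = rjoin (rjoin a b) c;
  meet_comm : forall a b, rmeet a b = rmeet b a;
  join_comm : forall a b, rjoin a b = rjoin b a;
  meet_absorb : forall a b, rmeet a (rjoin a b) = a;
  join_absorb : forall a b, rjoin a (rmeet a b) = a;
  meet_distr : forall a b c, rmeet a (rjoin b c) = rjoin (rmeet a b) (rmeet a c);
  meet_top : forall a, rmeet a rtop = a;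
  join_bot : forall a, rjoin a rbot = a;
  (* residuation, with a <= b := a /\ b = a *)
  resid_r : forall a b c, rmeet (rmul a b) c = rmul a b <-> rmeet b (rimp a c) = b;
  resid_l : forall a b c, rmeet (rmul a b) c = rmul a b <-> rmeet a (limp c b) = a;
  mul_top_r : forall a, rmeet (rmul a rtop) a = rmul a rtop;
  mul_top_l : forall a, rmeet (rmul rtop a) a = rmul rtop a;
  mul_sq : forall a b, rmeet (rmul a b) (rmul (rmul a b) b) = rmul a b
}.

Definition rle (A : RBA) (a b : car A) : Prop := rmeet A a b = a.

Definition finite_RBA (C : RBA) : Prop := exists l : list (car C), forall x, In x l.

Definition partial_embedding (A : RBA) (B : list (car A)) (C : RBA)
  (h : car A -> car C) : Prop :=
  (forall x y, In x B -> In y B -> h x = h y -> x = y) /\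
  (forall x y, In x B -> In y B -> In (rmeet A x y) B ->
     h (rmeet A x y) = rmeet C (h x) (h y)) /\
  (forall x y, In x B -> In y B -> In (rjoin A x y) B ->
     h (rjoin A x y) = rjoin C (h x) (h y)) /\
  (forall x y, In x B -> In y B -> In (rimp A x y) B ->
     h (rimp A x y) = rimp C (h x) (h y)) /\
  (forall x y, In x B -> In y B -> In (limp A x y) B ->
     h (limp A x y) = limp C (h x) (h y)) /\
  (forall x y, In x B -> In y B -> In (rmul A x y) B ->
     h (rmul A x y) = rmul C (h x) (h y)) /\
  (In (rtop A) B -> h (rtop A) = rtop C) /\
  (In (rbot A) B -> h (rbot A) = rbot C).

(* Main.v *)
Require Import Defs.
From Stdlib Require Import List Classical ClassicalEpsilon ProofIrrelevance.
Import ListNotations.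

Lemma meet_idem (A : RBA) (a : car A) : rmeet A a a = a.
Proof. rewrite <- (join_absorb A a a) at 2. apply meet_absorb. Qed.

Lemma le_refl (A : RBA) a : rle A a a.
Proof. apply meet_idem. Qed.

Lemma le_antisym (A : RBA) a b : rle A a b -> rle A b a -> a = b.
Proof. unfold rle; intros H1 H2. rewrite <- H1 at 1. rewrite <- H2 at 2. apply meet_comm. Qed.

Lemma le_trans (A : RBA) a b c : rle A a b -> rle A b c -> rle A a c.
Proof. unfold rle; intros H1 H2. rewrite <- H1, <- meet_assoc, H2; auto. Qed.

Lemma meet_lb1 (A : RBA) a b : rle A (rmeet A a b) a.
Proof. unfold rle. rewrite (meet_comm A a b), <- meet_assoc, meet_idem. auto. Qed.

Lemma meet_lb2 (A : RBA) a b : rle A (rmeet A a b) b.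
Proof. unfold rle. rewrite <- meet_assoc, meet_idem. auto. Qed.

Lemma meet_glb (A : RBA) a b c : rle A a b -> rle A a c -> rle A a (rmeet A b c).
Proof. unfold rle; intros H1 H2. rewrite meet_assoc, H1, H2. auto. Qed.

Lemma le_join (A : RBA) a c : rle A a c -> rjoin A a c = c.
Proof. unfold rle; intro H. rewrite <- H, join_comm, meet_comm. apply join_absorb. Qed.

Lemma join_le (A : RBA) a c : rjoin A a c = c -> rle A a c.
Proof. unfold rle; intro H. rewrite <- H. apply meet_absorb. Qed.

Lemma join_ub1 (A : RBA) a b : rle A a (rjoin A a b).
Proof. apply meet_absorb. Qed.

Lemma join_ub2 (A : RBA) a b : rle A b (rjoin A a b).
Proof. rewrite join_comm. apply meet_absorb. Qed.

Lemma join_lub (A : RBA) a b c : rle A a c -> rle A b c -> rle A (rjoin A a b) c.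
Proof. intros H1 H2. apply join_le. rewrite <- join_assoc, (le_join _ _ _ H2), (le_join _ _ _ H1). auto. Qed.

Lemma bot_le (A : RBA) a : rle A (rbot A) a.
Proof. apply join_le. rewrite join_comm. apply join_bot. Qed.

Lemma le_top (A : RBA) a : rle A a (rtop A).
Proof. apply meet_top. Qed.

Lemma meet_distr_r (A : RBA) a b c :
  rmeet A (rjoin A a b) c = rjoin A (rmeet A a c) (rmeet A b c).
Proof. rewrite meet_comm, meet_distr, (meet_comm A c a), (meet_comm A c b). auto. Qed.

Lemma mul_mono_l (A : RBA) u g y : rle A u g -> rle A (rmul A u y) (rmul A g y).
Proof.
  intro H. apply (proj2 (resid_l A u y (rmul A g y))).
  apply le_trans with g; auto. apply (proj1 (resid_l A g y (rmul A g y))). apply le_refl.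
Qed.

Fixpoint ml (A : RBA) (s : list (car A)) : car A :=
  match s with [] => rtop A | x :: t => rmeet A x (ml A t) end.
Fixpoint jl (A : RBA) (s : list (car A)) : car A :=
  match s with [] => rbot A | x :: t => rjoin A x (jl A t) end.
Fixpoint powerset {T} (s : list T) : list (list T) :=
  match s with [] => [[]] | b :: t => map (cons b) (powerset t) ++ powerset t end.

Lemma ml_lb (A : RBA) s x : In x s -> rle A (ml A s) x.
Proof.
  induction s as [|y s IH]; simpl; [tauto|]. intros [->|H].
  apply meet_lb1. eapply le_trans; [apply meet_lb2|auto].
Qed.
Lemma ml_glb (A : RBA) s z : (forall x, In x s -> rle A z x) -> rle A z (ml A s).
Proof.
  induction s as [|y s IH]; simpl; intros H. apply le_top.
  apply meet_glb; auto.
Qed.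
Lemma jl_ub (A : RBA) s x : In x s -> rle A x (jl A s).
Proof.
  induction s as [|y s IH]; simpl; [tauto|]. intros [->|H].
  apply join_ub1. eapply le_trans; [apply IH; auto|apply join_ub2].
Qed.
Lemma jl_lub (A : RBA) s z : (forall x, In x s -> rle A x z) -> rle A (jl A s) z.
Proof.
  induction s as [|y s IH]; simpl; intros H. apply bot_le.
  apply join_lub; auto.
Qed.
Lemma ml_ext (A : RBA) s t : (forall x, In x s <-> In x t) -> ml A s = ml A t.
Proof.
  intros H; apply le_antisym; apply ml_glb; intros; apply ml_lb; apply H; auto.
Qed.
Lemma jl_ext (A : RBA) s t : (forall x, In x s <-> In x t) -> jl A s = jl A t.
Proof.
  intros H; apply le_antisym; apply jl_lub; intros; apply jl_ub; apply H; auto.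
Qed.
Lemma ml_app (A : RBA) s t : ml A (s ++ t) = rmeet A (ml A s) (ml A t).
Proof. induction s; simpl. rewrite meet_comm, meet_top; auto. rewrite IHs, meet_assoc; auto. Qed.
Lemma jl_app (A : RBA) s t : jl A (s ++ t) = rjoin A (jl A s) (jl A t).
Proof. induction s; simpl. rewrite join_comm, join_bot; auto. rewrite IHs, join_assoc; auto. Qed.

Lemma powerset_sub {T} (s : list T) p : In p (powerset s) -> forall x, In x p -> In x s.
Proof.
  revert p; induction s as [|b t IH]; simpl.
  - intros p [<-|[]] x [].
  - intros p Hp x Hx. apply in_app_or in Hp as [Hp|Hp].
    + apply in_map_iff in Hp as [q [<- Hq]]. destruct Hx as [->|Hx]; [left; auto| right; exact (IH q Hq x Hx)].
    + right; exact (IH p Hp x Hx).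
Qed.

Lemma powerset_complete {T} (s : list T) (P : T -> Prop) :
  (forall x, P x -> In x s) -> exists p, In p (powerset s) /\ forall x, In x p <-> P x.
Proof.
  revert P; induction s as [|b t IH]; simpl; intros P HP.
  - exists []; split; auto. intros x; split; [intros []| intros H; exact (HP x H)].
  - destruct (IH (fun x => P x /\ x <> b)) as [q [Hq Hq']].
    { intros x [H1 H2]. destruct (HP x H1); [congruence|auto]. }
    destruct (classic (P b)) as [Pb|Pb].
    + exists (b :: q); split. apply in_or_app; left; apply in_map; auto.
      intros x; simpl; rewrite Hq'. split. intros [<-|[]]; auto.
      intros Px; destruct (classic (b = x)); auto.
    + exists q; split. apply in_or_app; auto.
      intros x; rewrite Hq'. split. tauto. intros Px; split; auto. intros ->; auto.
Qed.

Definition M (A : RBA) (B : list (car A)) := map (ml A) (powerset B).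
Definition Ll (A : RBA) (B : list (car A)) := map (jl A) (powerset (M A B)).

Lemma inM (A : RBA) B s : (forall y, In y s -> In y B) -> In (ml A s) (M A B).
Proof.
  intros H. destruct (powerset_complete B (fun y => In y s) H) as [p [Hp Hp']].
  rewrite (ml_ext A s p). apply in_map; auto. intros x; rewrite Hp'; tauto.
Qed.

Lemma inL (A : RBA) B S : (forall y, In y S -> In y (M A B)) -> In (jl A S) (Ll A B).
Proof.
  intros H. destruct (powerset_complete (M A B) (fun y => In y S) H) as [p [Hp Hp']].
  rewrite (jl_ext A S p). apply in_map; auto. intros x; rewrite Hp'; tauto.
Qed.

Lemma L_inv (A : RBA) B x : In x (Ll A B) -> exists S, (forall y, In y S -> In y (M A B)) /\ x = jl A S.
Proof.
  unfold Ll; intros H. apply in_map_iff in H as [S [<- HS]]. exists S; split; auto.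
  apply powerset_sub; auto.
Qed.

Lemma M_inv (A : RBA) B x : In x (M A B) -> exists s, (forall y, In y s -> In y B) /\ x = ml A s.
Proof.
  unfold M; intros H. apply in_map_iff in H as [S [<- HS]]. exists S; split; auto.
  apply powerset_sub; auto.
Qed.

Lemma L_bot (A : RBA) B : In (rbot A) (Ll A B).
Proof. apply (inL A B []). simpl; tauto. Qed.

Lemma L_top (A : RBA) B : In (rtop A) (Ll A B).
Proof.
  replace (rtop A) with (jl A [ml A []]). apply inL. intros y [<-|[]]. apply inM. simpl; tauto.
  simpl. apply join_bot.
Qed.

Lemma L_B (A : RBA) B b : In b B -> In b (Ll A B).
Proof.
  intros Hb. replace b with (jl A [ml A [b]]). apply inL. intros y [<-|[]]. apply inM.
  intros y [<-|[]]; auto. simpl. rewrite meet_top, join_bot. auto.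
Qed.

Lemma L_join (A : RBA) B x y : In x (Ll A B) -> In y (Ll A B) -> In (rjoin A x y) (Ll A B).
Proof.
  intros Hx Hy. destruct (L_inv A B x Hx) as [S [HS ->]]. destruct (L_inv A B y Hy) as [T [HT ->]].
  rewrite <- jl_app. apply inL. intros z Hz. apply in_app_or in Hz as [Hz|Hz]; auto.
Qed.

Lemma meet_jl (A : RBA) m T : rmeet A m (jl A T) = jl A (map (rmeet A m) T).
Proof.
  induction T as [|n T IH]; simpl.
  - rewrite meet_comm. apply bot_le.
  - rewrite meet_distr, IH. auto.
Qed.

Lemma jl_meet (A : RBA) S T :
  rmeet A (jl A S) (jl A T) = jl A (flat_map (fun m => map (rmeet A m) T) S).
Proof.
  induction S as [|m S IH]; simpl.
  - apply bot_le.
  - rewrite meet_distr_r, IH, meet_jl, jl_app. auto.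
Qed.

Lemma L_meet (A : RBA) B x y : In x (Ll A B) -> In y (Ll A B) -> In (rmeet A x y) (Ll A B).
Proof.
  intros Hx Hy. destruct (L_inv A B x Hx) as [S [HS ->]]. destruct (L_inv A B y Hy) as [T [HT ->]].
  rewrite jl_meet. apply inL. intros z Hz. apply in_flat_map in Hz as [m [Hm Hz]].
  apply in_map_iff in Hz as [n [<- Hn]].
  destruct (M_inv A B m (HS m Hm)) as [s [Hs ->]].
  destruct (M_inv A B n (HT n Hn)) as [t [Ht ->]].
  rewrite <- ml_app. apply inM. intros w Hw. apply in_app_or in Hw as [Hw|Hw]; auto.
Qed.

Lemma L_ml (A : RBA) B s : (forall x, In x s -> In x (Ll A B)) -> In (ml A s) (Ll A B).
Proof.
  induction s as [|x s IH]; simpl; intros H. apply L_top. apply L_meet; auto.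
Qed.

Lemma L_jl (A : RBA) B s : (forall x, In x s -> In x (Ll A B)) -> In (jl A s) (Ll A B).
Proof.
  induction s as [|x s IH]; simpl; intros H. apply L_bot. apply L_join; auto.
Qed.

Definition dec (P : Prop) : bool := if excluded_middle_informative P then true else false.
Lemma decP (P : Prop) : dec P = true <-> P.
Proof. unfold dec; destruct (excluded_middle_informative P); split; auto; discriminate. Qed.

Definition gam (A : RBA) B z := ml A (filter (fun y => dec (rle A z y)) (Ll A B)).

Lemma gam_L (A : RBA) B z : In (gam A B z) (Ll A B).
Proof. apply L_ml. intros x Hx. apply filter_In in Hx; tauto. Qed.

Lemma gam_ext (A : RBA) B z : rle A z (gam A B z).
Proof. apply ml_glb. intros x Hx. apply filter_In in Hx as [_ H]. apply decP; auto. Qed.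

Lemma gam_min (A : RBA) B z w : In w (Ll A B) -> rle A z w -> rle A (gam A B z) w.
Proof. intros H1 H2. apply ml_lb. apply filter_In; split; auto. apply decP; auto. Qed.

Lemma gam_fix (A : RBA) B w : In w (Ll A B) -> gam A B w = w.
Proof. intros H. apply le_antisym. apply gam_min; auto; apply le_refl. apply gam_ext. Qed.

Lemma gam_le (A : RBA) B z w : In w (Ll A B) -> (rle A (gam A B z) w <-> rle A z w).
Proof. intros H; split; intros H'. eapply le_trans; [apply gam_ext|exact H']. apply gam_min; auto. Qed.

Definition ri (A : RBA) B x z :=
  jl A (filter (fun y => dec (rle A (gam A B (rmul A x y)) z)) (Ll A B)).
Definition li (A : RBA) B z y :=
  jl A (filter (fun x => dec (rle A (gam A B (rmul A x y)) z)) (Ll A B)).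

Lemma ri_L (A : RBA) B x z : In (ri A B x z) (Ll A B).
Proof. apply L_jl. intros w Hw; apply filter_In in Hw; tauto. Qed.
Lemma li_L (A : RBA) B x z : In (li A B x z) (Ll A B).
Proof. apply L_jl. intros w Hw; apply filter_In in Hw; tauto. Qed.

Lemma ri_bound (A : RBA) B x z : In z (Ll A B) -> rle A (ri A B x z) (rimp A x z).
Proof.
  intros Hz. apply jl_lub. intros f Hf. apply filter_In in Hf as [_ Hf]. apply (proj1 (decP _)) in Hf.
  apply (proj1 (resid_r A x f z)). apply (proj1 (gam_le A B _ _ Hz)) in Hf. exact Hf.
Qed.
Lemma li_bound (A : RBA) B z y : In z (Ll A B) -> rle A (li A B z y) (limp A z y).
Proof.
  intros Hz. apply jl_lub. intros f Hf. apply filter_In in Hf as [_ Hf]. apply (proj1 (decP _)) in Hf.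
  apply (proj1 (resid_l A f y z)). apply (proj1 (gam_le A B _ _ Hz)) in Hf. exact Hf.
Qed.

Lemma res_r (A : RBA) B a b c : In b (Ll A B) -> In c (Ll A B) ->
  (rle A (gam A B (rmul A a b)) c <-> rle A b (ri A B a c)).
Proof.
  intros Hb Hc; split; intros H.
  - apply jl_ub. apply filter_In; split; auto. apply decP; auto.
  - apply gam_le; auto. apply (proj2 (resid_r A a b c)).
    eapply le_trans; [exact H|]. apply ri_bound; auto.
Qed.
Lemma res_l (A : RBA) B a b c : In a (Ll A B) -> In c (Ll A B) ->
  (rle A (gam A B (rmul A a b)) c <-> rle A a (li A B c b)).
Proof.
  intros Ha Hc; split; intros H.
  - apply jl_ub. apply filter_In; split; auto. apply decP; auto.
  - apply gam_le; auto. apply (proj2 (resid_l A a b c)).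
    eapply le_trans; [exact H|]. apply li_bound; auto.
Qed.

Lemma ri_pres (A : RBA) B x z : In z B -> In (rimp A x z) B -> ri A B x z = rimp A x z.
Proof.
  intros Hz Hi. apply le_antisym. apply ri_bound, L_B; auto.
  apply jl_ub. apply filter_In; split. apply L_B; auto. apply decP.
  apply gam_le. apply L_B; auto. apply (proj2 (resid_r A x _ z)). apply le_refl.
Qed.
Lemma li_pres (A : RBA) B z y : In z B -> In (limp A z y) B -> li A B z y = limp A z y.
Proof.
  intros Hz Hi. apply le_antisym. apply li_bound, L_B; auto.
  apply jl_ub. apply filter_In; split. apply L_B; auto. apply decP.
  apply gam_le. apply L_B; auto. apply (proj2 (resid_l A _ y z)). apply le_refl.
Qed.

Lemma sq_C (A : RBA) B x y :
  rle A (gam A B (rmul A x y)) (gam A B (rmul A (gam A B (rmul A x y)) y)).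
Proof.
  apply gam_min. apply gam_L. eapply le_trans; [apply (mul_sq A x y)|].
  eapply le_trans; [apply mul_mono_l, gam_ext|]. apply gam_ext.
Qed.

Definition TC (A : RBA) B := {x : car A | In x (Ll A B)}.

Lemma TC_eq (A : RBA) B (u v : TC A B) : proj1_sig u = proj1_sig v -> u = v.
Proof. destruct u, v; simpl; intros ->. f_equal. apply proof_irrelevance. Qed.

Definition Cmeet A B (u v : TC A B) : TC A B :=
  exist _ (rmeet A (proj1_sig u) (proj1_sig v)) (L_meet A B _ _ (proj2_sig u) (proj2_sig v)).
Definition Cjoin A B (u v : TC A B) : TC A B :=
  exist _ (rjoin A (proj1_sig u) (proj1_sig v)) (L_join A B _ _ (proj2_sig u) (proj2_sig v)).
Definition Ctop A B : TC A B := exist _ (rtop A) (L_top A B).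
Definition Cbot A B : TC A B := exist _ (rbot A) (L_bot A B).
Definition Cmul A B (u v : TC A B) : TC A B :=
  exist _ (gam A B (rmul A (proj1_sig u) (proj1_sig v))) (gam_L A B _).
Definition Crimp A B (u v : TC A B) : TC A B :=
  exist _ (ri A B (proj1_sig u) (proj1_sig v)) (ri_L A B _ _).
Definition Climp A B (u v : TC A B) : TC A B :=
  exist _ (li A B (proj1_sig u) (proj1_sig v)) (li_L A B _ _).

Lemma eqC (A : RBA) B (u v : TC A B) : u = v <-> proj1_sig u = proj1_sig v.
Proof. split; [intros ->; auto | apply TC_eq]. Qed.

Definition CR (A : RBA) (B : list (car A)) : RBA.
Proof.
  refine {| car := TC A B; rmeet := Cmeet A B; rjoin := Cjoin A B; rtop := Ctop A B;
    rbot := Cbot A B; rimp := Crimp A B; limp := Climp A B; rmul := Cmul A B |};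
  intros; repeat rewrite eqC; simpl.
  - apply meet_assoc.
  - apply join_assoc.
  - apply meet_comm.
  - apply join_comm.
  - apply meet_absorb.
  - apply join_absorb.
  - apply meet_distr.
  - apply meet_top.
  - apply join_bot.
  - apply (res_r A B); [apply (proj2_sig b) | apply (proj2_sig c)].
  - apply (res_l A B); [apply (proj2_sig a) | apply (proj2_sig c)].
  - apply (gam_le A B); [apply (proj2_sig a)|]. apply mul_top_r.
  - apply (gam_le A B); [apply (proj2_sig a)|]. apply mul_top_l.
  - apply sq_C.
Defined.

Fixpoint attach {T} (l : list T) : list {x | In x l} :=
  match l as l0 return list {x | In x l0} with
  | [] => []
  | a :: t => exist _ a (or_introl eq_refl) ::
              map (fun y => exist (fun x => In x (a :: t)) (proj1_sig y) (or_intror (proj2_sig y))) (attach t)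
  end.

Lemma attach_In {T} (l : list T) (u : {x | In x l}) : In u (attach l).
Proof.
  induction l as [|a t IH]; destruct u as [x Hx]. destruct Hx.
  simpl. destruct Hx as [Hx|Hx].
  - left. subst x. f_equal; try apply proof_irrelevance.
  - right. apply in_map_iff. exists (exist _ x Hx). split; [reflexivity | apply IH].
Qed.

Theorem mainTheorem5 :
  forall (A : RBA) (B : list (car A)),
    exists (C : RBA) (h : car A -> car C),
      finite_RBA C /\ partial_embedding A B C h.
Proof.
  intros A B. exists (CR A B).
  exists (fun x => match excluded_middle_informative (In x (Ll A B)) with
                   | left H => exist _ x H | right _ => Ctop A B end).
  assert (Hh : forall x, In x B -> proj1_sig (match excluded_middle_informative (In x (Ll A B)) with
                   | left H => exist (fun x => In x (Ll A B)) x H | right _ => Ctop A B end) = x).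
  { intros x Hx. destruct (excluded_middle_informative (In x (Ll A B))) as [H|H]; auto.
    exfalso; apply H, L_B; auto. }
  split.
  - exists (attach (Ll A B)). intros u. apply attach_In.
  - repeat split; intros; simpl; try (apply TC_eq; simpl; repeat rewrite Hh by auto).
    + rewrite <- (Hh x H), <- (Hh y H0). rewrite H1. auto.
    + auto.
    + auto.
    + symmetry; apply ri_pres; auto.
    + symmetry; apply li_pres; auto.
    + symmetry; apply gam_fix, L_B; auto.
    + auto.
    + auto.
Qed.
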